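(* If a CSCA $\mathbf{a}$ is fractal, then $\mathbf{a}^n$ is fractal for every $n\in\mathbb{N}$, $n\ge 1$.
   Context: $\mathcal{P}$ is the ring of Laurent polynomials in $u$ over $\mathbb{Z}_2$, $\mathcal{R}$ its subring of palindromes ($p(u^{-1})=p(u)$). A CSCA is a $2\times2$ matrix with entries in $\mathcal{R}$ and determinant $1$. A CSCA $\mathbf{a}$ is periodic if $\mathbf{a}^p=\mathbb{1}$ for some $p\ge1$. It has gliders if there exist a non-zero $\xi\in\mathcal{P}^2$ and an integer $k\neq0$ with $\mathbf{a}\xi=u^k\xi$. It is fractal if it is neither periodic nor has gliders. *)

(* Defs.v *)
From HB Require Import structures.
From mathcomp Require Import all_boot all_order all_algebra.
Set Implicit Arguments. Unset Strict Implicit. Unset Printing Implicit Defensive.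
Import GRing.Theory.
Local Open Scope ring_scope.

Notation F2 := 'F_2.
(* The ambient field K = Z_2(u) of rational functions in u; the ring P of
   Laurent polynomials is realised as a subring of K. *)
Notation K := {fraction {poly F2}}.

Definition tofracK (p : {poly F2}) : K := FracField.tofrac p.

Definition uK : K := tofracK 'X.

Definition laurent (x : K) : Prop :=
  exists (p : {poly F2}) (k : nat), x = tofracK p / uK ^+ k.

Definition subinv (p : {poly F2}) : K :=
  (map_poly (fun c : F2 => tofracK c%:P) p).[uK^-1].

(* x in R: a Laurent polynomial x = p(u) u^{-k} with x(u^{-1}) = x,
   where x(u^{-1}) = p(u^{-1}) u^{k} *)
Definition palindrome (x : K) : Prop :=
  exists (p : {poly F2}) (k : nat),
    x = tofracK p / uK ^+ k /\ subinv p * uK ^+ k = x.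

Definition CSCA (a : 'M[K]_2) : Prop :=
  (forall i j, palindrome (a i j)) /\ \det a = 1.

Definition periodic (a : 'M[K]_2) : Prop :=
  exists p : nat, (1 <= p)%N /\ a ^+ p = 1.

Definition has_gliders (a : 'M[K]_2) : Prop :=
  exists (xi : 'cV[K]_2) (k : int),
    (forall i, laurent (xi i 0)) /\ xi != 0 /\ k != 0 /\
    a *m xi = (uK ^ k) *: xi.

Definition fractal (a : 'M[K]_2) : Prop :=
  ~ periodic a /\ ~ has_gliders a.

(* Main.v *)
Require Import Defs.
From HB Require Import structures.
From mathcomp Require Import all_boot all_order all_algebra.
From mathcomp Require Import zify ring.
Import GRing.Theory.
Local Open Scope ring_scope.

Lemma F2_neq0 (c : F2) : c != 0 -> c = 1.
Proof. by case: c => -[|[|]] //= ? _; apply/val_inj. Qed.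

Lemma poly_root1 (p q : {poly F2}) (n : nat) : (0 < n)%N -> p != 0 -> q != 0 ->
  p ^+ n = q ^+ n -> p = q.
Proof.
move=> n0 p0 q0 E.
set g := gcdp p q.
have g0 : g != 0 by rewrite gcdp_eq0 negb_and p0.
have cop : coprimep (p %/ g) (q %/ g) by apply: coprimep_div_gcd; rewrite p0.
have Hp : p %/ g * g = p by apply: divpK; exact: dvdp_gcdl.
have Hq : q %/ g * g = q by apply: divpK; exact: dvdp_gcdr.
have E1 : (p %/ g) ^+ n = (q %/ g) ^+ n.
  apply: (mulIf (expf_neq0 n g0)); rewrite -!exprMn Hp Hq //.
have one (x y : {poly F2}) : coprimep x y -> x ^+ n = y ^+ n -> x != 0 -> x = 1.
  move=> cxy Exy x0.
  have : x %| 1.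
    rewrite -(@Gauss_dvdpl _ 1 (y ^+ n)); last exact: coprimep_expr.
    by rewrite mul1r -Exy -(prednK n0) exprS dvdp_mulIl.
  rewrite dvdp1 => /size_poly1P [c c0 ->].
  by rewrite (F2_neq0 _ c0).
have p10 : p %/ g != 0 by apply: contraNneq p0 => h; rewrite -Hp h mul0r.
have q10 : q %/ g != 0 by apply: contraNneq q0 => h; rewrite -Hq h mul0r.
have P1 := one _ _ cop E1 p10.
have Q1 : q %/ g = 1 by apply: (one _ (p %/ g)); rewrite 1?coprimep_sym // E1.
by rewrite -Hp -Hq P1 Q1.
Qed.

Lemma deg_root (P Q : {poly F2}) (n j : nat) : (0 < n)%N -> Q != 0 ->
  P ^+ n = Q ^+ n * 'X^j -> exists d : nat, j = (d * n)%N /\ P = Q * 'X^d.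
Proof.
move=> n0 Q0 E.
have Qn0 : Q ^+ n != 0 by rewrite expf_neq0.
have P0 : P != 0.
  apply/negP => /eqP P0; move: E; rewrite P0 expr0n gtn_eqF // => /esym/eqP.
  rewrite mulf_eq0 (negbTE Qn0) /= => /eqP Z; move: (congr1 (fun p : {poly F2} => size p) Z) => /=.
  by rewrite size_polyXn size_poly0.
have hs := size_exp P n.
have hq := size_exp Q n.
have : size (P ^+ n) = (j + size (Q ^+ n))%N by rewrite E size_mulXn.
have sp : (0 < size (P ^+ n))%N by rewrite size_poly_gt0 expf_neq0.
have sq : (0 < size (Q ^+ n))%N by rewrite size_poly_gt0.
move: hs hq sp sq.
set a := size (P ^+ n); set b := size (Q ^+ n).
move=> hs hq sp sq hab.
have hj : j = ((size P).-1 * n - (size Q).-1 * n)%N.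
  rewrite -hs -hq hab; rewrite -(prednK sq) addnS /=. lia.
exists ((size P).-1 - (size Q).-1)%N; split; first by rewrite mulnBl.
apply: (poly_root1 _ _ _ n0 P0).
  by rewrite mulf_neq0 // monic_neq0 // monicXn.
by rewrite exprMn -exprM mulnC mulnBr !(mulnC n) -hj E.
Qed.

Definition S (x : K) := exists p q : {poly F2}, q != 0 /\ x = tofracK p / tofracK q.

Lemma tofracK_eq0 p : (tofracK p == 0) = (p == 0).
Proof. exact: tofrac_eq0. Qed.

Lemma tofracKM p q : tofracK (p * q) = tofracK p * tofracK q.
Proof. exact: rmorphM. Qed.
Lemma tofracKX p n : tofracK (p ^+ n) = tofracK p ^+ n.
Proof. exact: rmorphXn. Qed.

Lemma uKX j : uK ^+ j = tofracK 'X^j.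
Proof. by rewrite /uK /tofracK rmorphXn. Qed.

Lemma uK_neq0 : uK != 0.
Proof. by rewrite /uK tofracK_eq0 polyX_eq0. Qed.

Lemma tofracK_inj p q : tofracK p = tofracK q -> p = q.
Proof. by move=> /eqP; rewrite /tofracK tofrac_eq => /eqP. Qed.

Lemma eig_pow (lam : K) (n : nat) (k : int) : (0 < n)%N -> S lam ->
  lam ^+ n = uK ^ k -> k != 0 -> exists m : int, m != 0 /\ lam = uK ^ m.
Proof.
move=> n0 [P [Q [Q0 ->]]] E k0.
have Q0' : tofracK Q != 0 by rewrite tofracK_eq0.
case: k E k0 => j E k0.
- have E2 : P ^+ n = Q ^+ n * 'X^j.
    apply: tofracK_inj; rewrite tofracKM !tofracKX.
    change (tofracK 'X) with uK.
    have E' : (tofracK P / tofracK Q) ^+ n = uK ^+ j := E.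
    by rewrite -E' expr_div_n mulrC (divfK (expf_neq0 n Q0')).
  have [d [jd Pd]] := deg_root _ _ _ _ n0 Q0 E2.
  exists (Posz d); split.
    by apply: contraNneq k0 => [[d0]]; rewrite jd d0.
  rewrite Pd tofracKM mulrAC (divff Q0') mul1r tofracKX.
  by [].
- have E' : (tofracK P / tofracK Q) ^+ n = (uK ^+ j.+1)^-1 := E.
  have P0 : P != 0.
    apply/negP => /eqP P0; move: E'.
    rewrite P0 (_ : tofracK 0 = 0); last exact: rmorph0.
    rewrite mul0r expr0n (gtn_eqF n0) => /esym/eqP.
    by rewrite invr_eq0 (negbTE (expf_neq0 _ uK_neq0)).
  have P0' : tofracK P != 0 by rewrite tofracK_eq0.
  have E2 : Q ^+ n = P ^+ n * 'X^(j.+1).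
    apply: tofracK_inj; rewrite tofracKM !tofracKX.
    change (tofracK 'X) with uK.
    have -> : uK ^+ j.+1 = (tofracK P ^+ n / tofracK Q ^+ n)^-1.
      by rewrite -expr_div_n E' invrK.
    by rewrite invf_div mulrC (divfK (expf_neq0 n P0')).
  have [d [jd Qd]] := deg_root _ _ _ _ n0 P0 E2.
  exists (- Posz d); split.
    rewrite oppr_eq0; apply/negP => /eqP [d0]; move: jd; rewrite d0 mul0n.
    by [].
  rewrite Qd tofracKM tofracKX.
  change (tofracK 'X) with uK.
  rewrite -exprz_inv.
  change ((uK^-1) ^ (Posz d)) with ((uK^-1) ^+ d).
  by rewrite exprVn invfM mulrA (divff P0') mul1r.
Qed.

Lemma uz_neq1 (j : int) : j != 0 -> uK ^ j != 1.
Proof.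
have h (i : nat) : uK ^+ i.+1 != 1.
  rewrite uKX; apply/negP => /eqP H.
  have H1 : 'X^(i.+1) = 1 :> {poly F2}.
    by apply: tofracK_inj; rewrite H; exact: (rmorph1 _).
  move: (congr1 (fun p : {poly F2} => size p) H1) => /=.
  by rewrite size_polyXn size_poly1.
case: j => i.
  by case: i => // i _; exact: h.
by move=> _; rewrite /exprz invr_eq1; exact: h.
Qed.
Lemma tofracKD p q : tofracK (p + q) = tofracK p + tofracK q.
Proof. exact: rmorphD. Qed.

Lemma S_laurent x : laurent x -> S x.
Proof.
move=> [p [k ->]]; exists p, 'X^k; split; first by rewrite monic_neq0 // monicXn.
by rewrite uKX.
Qed.

Lemma S_pal x : palindrome x -> S x.
Proof. by move=> [p [k [E _]]]; apply: S_laurent; exists p, k. Qed.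

Lemma S_mul x y : S x -> S y -> S (x * y).
Proof.
move=> [p1 [q1 [q10 ->]]] [p2 [q2 [q20 ->]]].
exists (p1 * p2), (q1 * q2); split; first by rewrite mulf_neq0.
by rewrite !tofracKM mulf_div.
Qed.

Lemma S_add x y : S x -> S y -> S (x + y).
Proof.
move=> [p1 [q1 [q10 ->]]] [p2 [q2 [q20 ->]]].
exists (p1 * q2 + p2 * q1), (q1 * q2); split; first by rewrite mulf_neq0.
have h1 : tofracK q1 != 0 by rewrite tofracK_eq0.
have h2 : tofracK q2 != 0 by rewrite tofracK_eq0.
rewrite (addf_div _ _ h1 h2) tofracKD !tofracKM.
by [].
Qed.

Lemma S_div x y : S x -> S y -> y != 0 -> S (x / y).
Proof.
move=> [p1 [q1 [q10 ->]]] [p2 [q2 [q20 ->]]] y0.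
have p20 : p2 != 0.
  apply: contraNneq y0 => ->; rewrite (_ : tofracK 0 = 0) ?mul0r //; exact: rmorph0.
exists (p1 * q2), (q1 * p2); split; first by rewrite mulf_neq0.
by rewrite invf_div mulf_div !tofracKM.
Qed.

Lemma ring_test (b0 b1 x0 x1 v0 v1 : K) :
  b0 * (x0 * v1 - x1 * v0) = v1 * (b0 * x0 + b1 * x1) - x1 * (b0 * v0 + b1 * v1).
Proof. ring. Qed.

Definition i0 : 'I_2 := ord0.
Definition i1 : 'I_2 := ord_max.

Lemma ord2P (i : 'I_2) : i = i0 \/ i = i1.
Proof. by case: i => [[|[|]]] // Hi; [left|right]; apply: val_inj. Qed.

Lemma mulmx2 (A : 'M[K]_2) (x : 'cV[K]_2) i :
  (A *m x) i 0 = A i i0 * x i0 0 + A i i1 * x i1 0.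
Proof.
rewrite mxE !big_ord_recl big_ord0 addr0.
have -> : lift ord0 ord0 = i1 :> 'I_2 by apply: val_inj.
by [].
Qed.

Lemma cV2_eq (x y : 'cV[K]_2) : x i0 0 = y i0 0 -> x i1 0 = y i1 0 -> x = y.
Proof.
move=> h0 h1; apply/matrixP => i j; rewrite (ord1 j).
by case: (ord2P i) => ->.
Qed.

Lemma powmx_eig (a : 'M[K]_2) (xi : 'cV[K]_2) lam m :
  a *m xi = lam *: xi -> a ^+ m *m xi = lam ^+ m *: xi.
Proof.
move=> E; elim: m => [|m IH]; first by rewrite expr0 mul1mx scale1r.
by rewrite exprS -mulmxE -mulmxA IH -scalemxAr E scalerA mulrC -exprS.
Qed.

Lemma det_pow (a : 'M[K]_2) m : \det (a ^+ m) = \det a ^+ m.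
Proof.
elim: m => [|m IH]; first by rewrite !expr0 det1.
by rewrite !exprS -mulmxE det_mulmx IH.
Qed.

Theorem mainTheorem7 (a : 'M[{fraction {poly 'F_2}}]_2) :
  CSCA a -> fractal a -> forall n : nat, (1 <= n)%N -> fractal (a ^+ n).
Proof.
move=> [Hpal Hdet] [Hnp Hng] n n1; split.
  move=> [p [p1 Hp]]; apply: Hnp; exists (n * p)%N; split.
    by rewrite muln_gt0 n1 p1.
  by rewrite exprM.
move=> [xi [k [Hl [xi0 [k0 E]]]]]; apply: Hng.
set v := a *m xi.
have vdef : v = a *m xi by [].
clearbody v.
have xinz : xi i0 0 != 0 \/ xi i1 0 != 0.
  case: (eqVneq (xi i0 0) 0) => h0; last by left.
  case: (eqVneq (xi i1 0) 0) => h1; last by right.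
  have : xi = 0 by apply: cV2_eq; rewrite ?mxE.
  by move=> h; move: xi0; rewrite h eqxx.
have Sv i : S (v i 0).
  rewrite vdef mulmx2; apply: S_add; apply: S_mul;
   by [apply: S_pal | apply: S_laurent].
case: (eqVneq (xi i0 0 * v i1 0 - xi i1 0 * v i0 0) 0) => d0.
-
  have [lam [Slam Hv]] : exists lam, S lam /\ v = lam *: xi.
    case: xinz => hx.
    + exists (v i0 0 / xi i0 0); split; first by apply: S_div => //; apply: S_laurent.
      apply: cV2_eq; rewrite mxE.
        by rewrite (divfK hx).
      apply: (mulIf hx); rewrite mulrAC (divfK hx).
      apply/eqP; rewrite -subr_eq0; apply/eqP.
      transitivity (xi i0 0 * v i1 0 - xi i1 0 * v i0 0); first by ring.
      by rewrite d0.
    + exists (v i1 0 / xi i1 0); split; first by apply: S_div => //; apply: S_laurent.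
      apply: cV2_eq; rewrite mxE; last by rewrite (divfK hx).
      apply: (mulIf hx); rewrite mulrAC (divfK hx).
      apply/eqP; rewrite -subr_eq0; apply/eqP.
      transitivity (- (xi i0 0 * v i1 0 - xi i1 0 * v i0 0)); first by ring.
      by rewrite d0 oppr0.
  have Hn := powmx_eig a xi lam n (etrans (esym vdef) Hv).
  have Hln : lam ^+ n = uK ^ k.
    rewrite E in Hn.
    case: xinz => hx.
      apply: (mulIf hx); move: (congr1 (fun M : 'cV[K]_2 => M i0 0) Hn) => /=.
      by rewrite !mxE => ->.
    apply: (mulIf hx); move: (congr1 (fun M : 'cV[K]_2 => M i1 0) Hn) => /=.
    by rewrite !mxE => ->.
  have [m [m0 Hm]] := eig_pow lam n k n1 Slam Hln k0.
  exists xi, m; split => //; split => //; split => //.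
  by rewrite -vdef Hv Hm.
- (* independent case: a^n is scalar *)
  exfalso.
  set B := a ^+ n - (uK ^ k)%:M.
  have Bdef : B = a ^+ n - (uK ^ k)%:M by [].
  clearbody B.
  have Bxi : B *m xi = 0 by rewrite Bdef mulmxBl E mul_scalar_mx subrr.
  have Bv : B *m v = 0.
    have -> : B *m v = a *m (B *m xi).
      rewrite vdef mulmxA [RHS]mulmxA; congr (_ *m _).
      rewrite Bdef mulmxBl mulmxBr scalar_mxC; congr (_ - _).
      by rewrite !mulmxE -exprSr exprS.
    by rewrite Bxi mulmx0.
  have B0 : B = 0.
    apply/matrixP => i j.
    have e1 := congr1 (fun M : 'cV[K]_2 => M i 0) Bxi.
    have e2 := congr1 (fun M : 'cV[K]_2 => M i 0) Bv.
    rewrite /= mulmx2 mxE in e1; rewrite /= mulmx2 mxE in e2.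
    rewrite mxE.
    case: (ord2P j) => ->.
      apply: (mulIf d0); rewrite mul0r.
      transitivity (v i1 0 * (B i i0 * xi i0 0 + B i i1 * xi i1 0)
                    - xi i1 0 * (B i i0 * v i0 0 + B i i1 * v i1 0)); first by ring.
      by rewrite e1 e2 !mulr0 subrr.
    apply: (mulIf d0); rewrite mul0r.
    transitivity (xi i0 0 * (B i i0 * v i0 0 + B i i1 * v i1 0)
                  - v i0 0 * (B i i0 * xi i0 0 + B i i1 * xi i1 0)); first by ring.
    by rewrite e1 e2 !mulr0 subrr.
  have Han : a ^+ n = (uK ^ k)%:M by apply/eqP; rewrite -subr_eq0 -Bdef B0.
  have := det_pow a n; rewrite Han det_scalar Hdet expr1n => H2.
  have : uK ^ (k * 2) = 1 by rewrite -exprz_exp; exact: H2.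
  apply/eqP; apply: uz_neq1.
  by rewrite mulf_neq0.
Qed.
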